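(* Let $L\subset\mathbb{R}$ be a Galois extension of $\mathbb{Q}$ with cyclic Galois group of order $4$, let $l$ be its unique quadratic subfield with fundamental unit $u_l>1$, and suppose that there is no $u\in\mathcal{O}_L^*$ with $N_{L/l}(u)=\pm u_l$ (equivalently, $\mathcal{O}_L^*$ is generated by $\mathcal{O}_l^*$ together with the relative units $\{w\in\mathcal{O}_L^*: N_{L/l}(w)=\pm1\}$). Then every nonzero $w\in\bigwedge^2\operatorname{LOG}(\mathcal{O}_L^* )$ satisfies $$\|w\|_1\ge 8\log\!\left(\tfrac{1+\sqrt5}{2}\right)^2.$$
   Context: For a totally real number field $L$, $\operatorname{LOG}:\mathcal{O}_L^*\to\mathbb{R}^{\mathcal{A}_L}$, $\operatorname{LOG}(\gamma)=(\log|\tau(\gamma)|)_\tau$, indexed by the real embeddings $\tau$ of $L$. With the standard orthonormal basis $\{\delta^v\}$ of $\mathbb{R}^{\mathcal{A}_L}$ and $\delta^I=\delta^{v_1}\wedge\cdots\wedge\delta^{v_j}$ for $j$-subsets $I$, the 1-norm of $w=\sum_I c_I\delta^I\in\bigwedge^j\mathbb{R}^{\mathcal{A}_L}$ is $\|w\|_1=\sum_I|c_I|$. $\bigwedge^2\operatorname{LOG}(\mathcal{O}_L^* )$ is the subgroup generated by all $\operatorname{LOG}(a)\wedge\operatorname{LOG}(b)$ with $a,b\in\mathcal{O}_L^*$. *)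

(* Defs.v *)
From HB Require Import structures.
From mathcomp Require Import all_boot all_order all_algebra all_fingroup all_solvable all_field.
From mathcomp Require Import all_classical all_reals.
From mathcomp Require Import exp.
Set Implicit Arguments. Unset Strict Implicit. Unset Printing Implicit Defensive.
Import Order.TTheory GRing.Theory Num.Theory.
Local Open Scope ring_scope.
Local Open Scope classical_set_scope.

Section Defs.
Variables (L : fieldExtType rat) (R : realType).

Definition alg_int (x : L) : Prop :=
  exists p : {poly int}, p \is monic /\ root (map_poly (fun z : int => z%:~R) p) x.

Definition OL_unit (x : L) : Prop := alg_int x /\ x != 0 /\ alg_int x^-1.

Definition real_emb (f : L -> R) : Prop :=
  [/\ forall x y, f (x + y) = f x + f y,
      forall x y, f (x * y) = f x * f y & f 1 = 1].

Definition LOG (a : L) : (L -> R) -> R := fun f => ln `|f a|.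

(* Elements of /\^2 R^{A_L} are represented by their (antisymmetric) coefficient
   function: w tau sigma = coefficient of delta^tau /\ delta^sigma. *)
Definition wedge2 (x y : (L -> R) -> R) : (L -> R) -> (L -> R) -> R :=
  fun f g => x f * y g - x g * y f.

Inductive wedge2_LOG_group : ((L -> R) -> (L -> R) -> R) -> Prop :=
| w2_zero : wedge2_LOG_group (fun _ _ => 0)
| w2_gen a b : OL_unit a -> OL_unit b -> wedge2_LOG_group (wedge2 (LOG a) (LOG b))
| w2_sub w1 w2 : wedge2_LOG_group w1 -> wedge2_LOG_group w2 ->
    wedge2_LOG_group (fun f g => w1 f g - w2 f g).

Definition emb_pairs : set ((L -> R) * (L -> R)) :=
  [set p | real_emb p.1 /\ real_emb p.2 /\ p.1 <> p.2].

(* 1-norm: sum over 2-subsets {tau, sigma} of |c_{tau,sigma}|, i.e. half the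
   sum over ordered pairs of distinct embeddings *)
Definition wedge_norm1 (w : (L -> R) -> (L -> R) -> R) : R :=
  (\sum_(p \in emb_pairs) `|w p.1 p.2|) / 2.

Definition wedge_nonzero (w : (L -> R) -> (L -> R) -> R) : Prop :=
  exists f g, real_emb f /\ real_emb g /\ w f g != 0.

End Defs.

(* Main.v *)
Require Import Defs.
From HB Require Import structures.
From mathcomp Require Import all_boot all_order all_algebra all_fingroup all_solvable all_field.
From mathcomp Require Import all_classical all_reals.
From mathcomp Require Import exp.
From mathcomp Require Import ring lra zify.
Import Order.TTheory GRing.Theory Num.Theory.
Local Open Scope ring_scope.
Set Implicit Arguments. Unset Strict Implicit. Unset Printing Implicit Defensive.
Section AlgInt.
Variable (L : fieldExtType rat).

Lemma alg_intE (x : L) : alg_int x <-> integralOver (intr : int -> L) x.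
Proof. by split=> [[p [mp rp]]|[p mp rp]]; [exists p|exists p]. Qed.

Lemma alg_int_mul (x y : L) : alg_int x -> alg_int y -> alg_int (x * y).
Proof. by move=> /alg_intE hx /alg_intE hy; apply/alg_intE; apply: integral_mul. Qed.

Lemma alg_int_sub (x y : L) : alg_int x -> alg_int y -> alg_int (x - y).
Proof. by move=> /alg_intE hx /alg_intE hy; apply/alg_intE; apply: integral_sub. Qed.

Lemma alg_int1 : alg_int (1 : L).
Proof. by apply/alg_intE; apply: integral1. Qed.

Lemma alg_int_rat (q : rat) : alg_int (q%:A : L) -> exists z : int, q = z%:~R.
Proof.
case=> p [mp rp].
have rq : root (map_poly (intr : int -> rat) p) q.
  move: rp; rewrite /root.
  have -> : map_poly (fun z : int => (z%:~R : L)) p = map_poly (in_alg L) (map_poly intr p).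
    by rewrite -map_poly_comp; apply: eq_map_poly => z /=; rewrite [RHS](rmorph_int (in_alg L)).
  by rewrite -[q%:A]/(in_alg L q) horner_map /=; rewrite (fmorph_eq0 (in_alg L)).
have : ratr q \in Aint.
  apply: (@root_monic_Aint (map_poly (intr : int -> algC) p)).
  - have -> : map_poly (intr : int -> algC) p = map_poly ratr (map_poly intr p).
      by rewrite -map_poly_comp; apply: eq_map_poly => z /=; rewrite rmorph_int.
    by rewrite fmorph_root.
  - exact: monic_map.
  - by apply/polyOverP => i; rewrite coef_map /= rpred_int.
move=> /(Cint_rat_Aint (Crat_rat q)) /intrP [z hz]; exists z.
apply: (@fmorph_inj _ _ (@ratr algC)). by rewrite /= hz ratr_int.
Qed.
End AlgInt.
Section Gal.
Variables (L : splittingFieldType rat) (R : realType) (iota : {rmorphism L -> R}).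
Variable (s : gal_of {:L}).
Hypothesis HGal : galois 1 {:L}.
Hypothesis Hs : 'Gal({:L} / 1%VS)%g = <[s]>%g.
Hypothesis Hos : #[s]%g = 4%N.

Lemma inG (g : gal_of {:L}) : g \in 'Gal({:L} / 1%VS)%g.
Proof. by rewrite gal_kHom ?sub1v // k1AHom. Qed.

Lemma gal_pow (g : gal_of {:L}) : exists2 k, (k < 4)%N & g = (s ^+ k)%g.
Proof.
have := inG g; rewrite Hs => /cyclePmin [k hk ->]; exists k => //; by rewrite -Hos.
Qed.

Lemma galMx (g h : gal_of {:L}) x : (g * h)%g x = h (g x).
Proof. by rewrite galM // memvf. Qed.

Lemma galX (j k : nat) x : (s ^+ k)%g ((s ^+ j)%g x) = (s ^+ (j + k))%g x.
Proof. by rewrite expgD galMx. Qed.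

Lemma gal_mod (k : nat) x : (s ^+ k)%g x = (s ^+ (k %% 4))%g x.
Proof. by rewrite -Hos expg_mod_order. Qed.

Lemma galRM (g : gal_of {:L}) (x y : L) : g (x * y) = g x * g y.
Proof. exact: rmorphM. Qed.

Lemma galR1 (g : gal_of {:L}) : g 1 = 1.
Proof. exact: rmorph1. Qed.

Lemma galNormQ x : galNorm 1 {:L} x = \prod_(k < 4) (s ^+ k)%g x.
Proof.
rewrite /galNorm.
have -> : 'Gal({:L} / 1%VS)%g = (fun k : 'I_4 => (s ^+ k)%g) @: [set: 'I_4].
  apply/setP => g; rewrite Hs; apply/idP/idP.
    move=> /cyclePmin [k hk ->]; apply/imsetP.
    by exists (Ordinal (leq_trans hk (eq_leq Hos))).
  by move=> /imsetP [k _ ->]; apply: mem_cycle.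
rewrite big_imset /=; first by apply: eq_bigl => k; rewrite inE.
move=> i j _ _ /eqP; rewrite eq_expg_mod_order Hos !modn_small //.
by move=> /eqP /val_inj.
Qed.

Lemma galNormQ_rat x : exists q : rat, galNorm 1 {:L} x = q%:A.
Proof.
have /vlineP [q ->] := mem_galNorm HGal (memvf x); by exists q.
Qed.

Lemma alg_int_gal (g : gal_of {:L}) x : alg_int x -> alg_int (g x).
Proof.
case=> p [mp rp]; exists p; split => //.
have := congr1 g (eqP rp); rewrite rmorph0.
have hm : map_poly g (map_poly (fun z : int => (z%:~R : L)) p) = map_poly (fun z : int => z%:~R) p.
  by rewrite -map_poly_comp; apply: eq_map_poly => z /=; rewrite rmorph_int.
by rewrite -horner_map hm => h; apply/eqP.
Qed.


Lemma galNormQ_int x : alg_int x -> exists z : int, galNorm 1 {:L} x = z%:~R.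
Proof.
move=> hx; have [q hq] := galNormQ_rat x.
have : alg_int (q%:A : L).
  rewrite -hq galNormQ; apply: (big_ind (@alg_int L)) => //.
  - exact: alg_int1.
  - exact: alg_int_mul.
  - by move=> k _; apply: alg_int_gal.
move=> /alg_int_rat [z hz]; exists z; rewrite hq hz.
by rewrite -[_%:A]/(in_alg L _) rmorph_int.
Qed.
End Gal.

Section Emb.
Variables (L : splittingFieldType rat) (R : realType) (iota : {rmorphism L -> R}).
Variables (f : L -> R) (Hf : real_emb f).

Definition femb : L -> R := fun x => f x.
Fact femb_zmod : GRing.zmod_morphism femb.
Proof.
case: Hf => fD fM f1 x y; rewrite /femb.
have f0 : f 0 = 0 by have := fD 0 0; rewrite addr0 => h; lra.
have fN : f (- y) = - f y by have := fD y (- y); rewrite subrr f0 => h; lra.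
by rewrite fD fN.
Qed.
Fact femb_monoid : GRing.monoid_morphism femb.
Proof. by case: Hf => fD fM f1; split => // x y; rewrite /femb fM. Qed.
HB.instance Definition _ := GRing.isZmodMorphism.Build L R femb femb_zmod.
HB.instance Definition _ := GRing.isMonoidMorphism.Build L R femb femb_monoid.

Lemma femb_rat (q : rat) : f (q%:A) = ratr q.
Proof. by have := fmorph_eq_rat (femb \o in_alg L) q. Qed.

Lemma iota_rat (q : rat) : iota (q%:A) = ratr q.
Proof. by have := fmorph_eq_rat (iota \o in_alg L) q. Qed.

Lemma emb_img x : exists y : L, f x == iota y.
Proof.
have hp := minPolyOver 1 x.
have /polyOver1P [p0 hp0] := hp.
have /normalField_factors hn := normalFieldf (1%AS : {subfield L}).
have [r _ hr] := hn (sub1v _) x (memvf x).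
have hf : map_poly femb (minPoly 1 x) = map_poly iota (minPoly 1 x).
  rewrite hp0 -!map_poly_comp; apply: eq_map_poly => q /=.
  by rewrite /= /femb femb_rat iota_rat.
have : root (map_poly femb (minPoly 1 x)) (femb x) by rewrite fmorph_root root_minPoly.
rewrite hf hr rmorph_prod /=.
have -> : \prod_(i <- r) map_poly iota ('X - (i x)%:P) = \prod_(y <- [seq iota ((i : gal_of {:L}) x) | i <- r]) ('X - y%:P).
  by rewrite big_map; apply: eq_bigr => i _; rewrite map_polyXsubC.
rewrite root_prod_XsubC => /mapP [g _ hg]; exists (g x); apply/eqP; exact: hg.
Qed.

Definition hemb (x : L) : L := xchoose (emb_img x).
Lemma hembE x : iota (hemb x) = f x.
Proof. by have /eqP -> := xchooseP (emb_img x). Qed.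

Lemma hemb_lin : linear hemb.
Proof.
move=> a x y; apply: (fmorph_inj iota).
rewrite rmorphD /= !hembE.
case: Hf => fD fM f1; rewrite fD; congr (_ + _).
rewrite -[a *: x]mulr_algl -[a *: hemb x]mulr_algl fM rmorphM /= hembE.
by rewrite -[a%:A]/(in_alg L a) femb_rat iota_rat.
Qed.
HB.instance Definition _ := GRing.isLinear.Build rat L L _ hemb hemb_lin.

Lemma emb_gal : exists g : gal_of {:L}, forall x, f x = iota (g x).
Proof.
have hk : kHom 1 {:L} (linfun hemb).
  apply/kHom_lrmorphism; split.
    move=> x y; rewrite !lfunE; apply: (fmorph_inj iota).
    by rewrite rmorphM /= !hembE; case: Hf.
  by rewrite lfunE; apply: (fmorph_inj iota); rewrite hembE rmorph1; case: Hf.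
have [g _ hg] := kAut_to_gal (introT idP (etrans (kAutfE _ _) hk)).
exists g => x; by rewrite -hg ?memvf // lfunE hembE.
Qed.
End Emb.

Section Real.
Variable R : realType.

Definition phi : R := (1 + Num.sqrt 5) / 2.

Lemma sqrt5_facts : 0 <= Num.sqrt (5 : R) /\ Num.sqrt (5 : R) ^+ 2 = 5.
Proof. by split; [apply: sqrtr_ge0 | rewrite sqr_sqrtr]. Qed.

Lemma phi_gt1 : 1 < phi.
Proof.
have [h0 h5] := sqrt5_facts; rewrite /phi.
have : 1 < Num.sqrt (5 : R) by nra.
move=> h; lra.
Qed.

Lemma lnphi_gt0 : 0 < ln phi.
Proof. exact: ln_gt0 phi_gt1. Qed.

Lemma absV_form (x : R) : x != 0 -> `|x - x^-1| = `| `|x| - `|x|^-1 |.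
Proof.
move=> hx; have hax : `|x| != 0 by rewrite normr_eq0.
have -> : x - x^-1 = (x ^+ 2 - 1) / x by field.
have -> : `|x| - `|x|^-1 = (`|x| ^+ 2 - 1) / `|x| by field.
by rewrite !normrM !normfV normr_id real_normK ?num_real.
Qed.

Lemma Pform (t : R) : 0 < t -> exists P, [/\ 1 <= P, `|t - t^-1| = P - P^-1 & `|ln t| = ln P].
Proof.
move=> ht; have [h1|h1] := lerP 1 t.
  exists t; split => //.
    apply: ger0_norm; rewrite subr_ge0; apply: (le_trans _ h1).
    by rewrite invf_le1.
  by apply: ger0_norm; apply: ln_ge0.
exists t^-1; split.
- by rewrite invf_ge1 // ltW.
- rewrite invrK ler0_norm ?opprB //; rewrite subr_le0; apply: (le_trans (ltW h1)).
  by rewrite invf_ge1 // ltW.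
- rewrite lnV ?posrE //; apply: ler0_norm; apply: ln_le0; exact: ltW.
Qed.

Lemma PQ_bound (P Q : R) : 1 <= P -> 1 <= Q -> 1 <= (P - P^-1) * (Q - Q^-1) ->
  phi ^+ 2 <= P * Q.
Proof.
move=> hP hQ h.
have hP0 : P != 0 by apply: lt0r_neq0; lra.
have hQ0 : Q != 0 by apply: lt0r_neq0; lra.
have e : (P - P^-1) * (Q - Q^-1) = ((P * Q) ^+ 2 - P ^+ 2 - Q ^+ 2 + 1) / (P * Q).
  by field; rewrite hP0 hQ0.
have hPQ : 0 < P * Q by nra.
move: h; rewrite e ler_pdivlMr // mul1r => h.
have hsq : 0 <= (P - Q) ^+ 2 by apply: sqr_ge0.
have hM : (P * Q) ^+ 2 - 3 * (P * Q) + 1 >= 0 by nra.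
have [h0 h5] := sqrt5_facts.
rewrite /phi; set M := P * Q in hM hPQ *.
have hM1 : 1 <= M by rewrite /M; nra.
have hr1 : 1 < Num.sqrt (5 : R) by nra.
have : (M - (3 + Num.sqrt 5) / 2) * (M - (3 - Num.sqrt 5) / 2) >= 0 by nra.
nra.
Qed.

Lemma key_rel (x y : R) : x != 0 -> y != 0 -> 1 <= `|x - x^-1| * `|y - y^-1| ->
  2 * ln phi <= `|ln (`|x|)| + `|ln (`|y|)|.
Proof.
move=> hx hy h.
have hx' : 0 < `|x| by rewrite normr_gt0.
have hy' : 0 < `|y| by rewrite normr_gt0.
have [P [hP1 hPe hPl]] := Pform hx'.
have [Q [hQ1 hQe hQl]] := Pform hy'.
rewrite (absV_form hx) (absV_form hy) hPe hQe in h.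
rewrite hPl hQl -lnM ?posrE; [|lra|lra].
have hphi := phi_gt1.
rewrite -[2]/(1 *+ 2) mulr_natl -lnXn; last lra.
rewrite ler_ln ?posrE; [|nra|nra].
exact: PQ_bound.
Qed.

Lemma key_ul (x : R) : 1 < x -> 1 <= x - x^-1 -> ln phi <= ln x.
Proof.
move=> hx h; rewrite ler_ln ?posrE; [| have := phi_gt1; lra | lra].
have hx0 : x != 0 by apply: lt0r_neq0; lra.
have e : x - x^-1 = (x ^+ 2 - 1) / x by field.
move: h; rewrite e ler_pdivlMr; last lra.
rewrite mul1r => h.
have [h0 h5] := sqrt5_facts; rewrite /phi.
have : (x - (1 + Num.sqrt 5) / 2) * (x - (1 - Num.sqrt 5) / 2) >= 0 by nra.
nra.
Qed.

End Real.

Section Gauss.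
Variable R : realType.
Variable Lam : R -> R -> Prop.
Hypothesis Lam0 : Lam 0 0.
Hypothesis LamB : forall a1 b1 a2 b2, Lam a1 b1 -> Lam a2 b2 -> Lam (a1 - a2) (b1 - b2).
Hypothesis LamG : forall a b (n m : int), Lam a b ->
  Lam (n%:~R * a + m%:~R * b) (n%:~R * b - m%:~R * a).
Variable delta : R.
Hypothesis delta_gt0 : 0 < delta.
Hypothesis Lam_min : forall a b, Lam a b -> a != 0 \/ b != 0 -> delta <= a ^+ 2 + b ^+ 2.

Definition divG (g1 g2 a b : R) := exists n m : int,
  a = n%:~R * g1 + m%:~R * g2 /\ b = n%:~R * g2 - m%:~R * g1.

Lemma divG_self g1 g2 : divG g1 g2 g1 g2.
Proof. by exists 1, 0; rewrite !rmorph1 !rmorph0 /=; split; ring. Qed.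

Lemma divG0 g1 g2 : divG g1 g2 0 0.
Proof. by exists 0, 0; rewrite !rmorph0; split; ring. Qed.

Lemma Lam_zero a b : Lam a b -> a ^+ 2 + b ^+ 2 < delta -> a = 0 /\ b = 0.
Proof.
move=> h hd; have [a0|a0] := eqVneq a 0; have [b0|b0] := eqVneq b 0; first by [].
- by have := Lam_min h (or_intror b0) => hm; exfalso; lra.
- by have := Lam_min h (or_introl a0) => hm; exfalso; lra.
- by have := Lam_min h (or_introl a0) => hm; exfalso; lra.
Qed.

Lemma round_bound (x : R) : exists n : int, (x - n%:~R) ^+ 2 <= 1 / 4.
Proof.
exists (Num.floor (x + 1 / 2)).
have := floor_itv (x + 1 / 2); rewrite intrD rmorph1 => /andP [h1 h2].
set f := (Num.floor (x + 1 / 2))%:~R in h1 h2 *.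
have : - (1 / 2) <= x - f < 1 / 2 by apply/andP; split; lra.
move=> /andP [h3 h4]; nra.
Qed.

Lemma gcd_k (k : nat) : forall a1 b1 a2 b2, Lam a1 b1 -> Lam a2 b2 ->
  a2 ^+ 2 + b2 ^+ 2 < delta * 2 ^+ k ->
  exists g1 g2, [/\ Lam g1 g2, divG g1 g2 a1 b1 & divG g1 g2 a2 b2].
Proof.
elim: k => [|k ih] a1 b1 a2 b2 h1 h2 hd.
  have [-> ->] : a2 = 0 /\ b2 = 0 by apply: Lam_zero => //; rewrite expr0 mulr1 in hd.
  by exists a1, b1; split => //; [apply: divG_self | apply: divG0].
have [z|nz] := boolP ((a2 == 0) && (b2 == 0)).
  move: z => /andP [/eqP -> /eqP ->].
  by exists a1, b1; split => //; [apply: divG_self | apply: divG0].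
set D := a2 ^+ 2 + b2 ^+ 2.
have hD : 0 < D.
  rewrite /D; move: nz; rewrite negb_and => /orP [] h.
    have : 0 < a2 ^+ 2 by rewrite exprn_even_gt0.
    have : 0 <= b2 ^+ 2 by apply: sqr_ge0.
    lra.
  have : 0 < b2 ^+ 2 by rewrite exprn_even_gt0.
  have : 0 <= a2 ^+ 2 by apply: sqr_ge0.
  lra.
have hD0 : D != 0 by apply: lt0r_neq0.
set s0 := (a1 * a2 + b1 * b2) / D.
set t0 := (a1 * b2 - b1 * a2) / D.
have e1 : a1 = s0 * a2 + t0 * b2 by rewrite /s0 /t0 /D; field.
have e2 : b1 = s0 * b2 - t0 * a2 by rewrite /s0 /t0 /D; field.
have [n hn] := round_bound s0.
have [m hm] := round_bound t0.
set r1 := a1 - (n%:~R * a2 + m%:~R * b2).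
set r2 := b1 - (n%:~R * b2 - m%:~R * a2).
have hr : Lam r1 r2 by apply: LamB => //; apply: LamG.
have er : r1 ^+ 2 + r2 ^+ 2 = ((s0 - n%:~R) ^+ 2 + (t0 - m%:~R) ^+ 2) * D.
  by rewrite /r1 /r2 e1 e2 /D; ring.
have hr2 : r1 ^+ 2 + r2 ^+ 2 < delta * 2 ^+ k.
  rewrite er; rewrite [2 ^+ k.+1]exprS in hd.
  have : ((s0 - n%:~R) ^+ 2 + (t0 - m%:~R) ^+ 2) * D <= D / 2 by nra.
  have hd' : D < 2 * (delta * 2 ^+ k) by move: hd; rewrite mulrCA.
  lra.
have [g1 [g2 [hg [p [q [ep1 ep2]]] [p' [q' [eq1 eq2]]]]]] := ih _ _ _ _ h2 hr hr2.
exists g1, g2; split => //; last by exists p, q.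
exists (n * p - m * q + p'), (n * q + m * p + q').
rewrite !(rmorphD, rmorphB, rmorphM) /=.
have ea1 : a1 = n%:~R * a2 + m%:~R * b2 + r1 by rewrite /r1; ring.
have eb1 : b1 = n%:~R * b2 - m%:~R * a2 + r2 by rewrite /r2; ring.
rewrite ea1 eb1 ep1 ep2 eq1 eq2; split; ring.
Qed.

Lemma gcd_ex a1 b1 a2 b2 : Lam a1 b1 -> Lam a2 b2 ->
  exists g1 g2, [/\ Lam g1 g2, divG g1 g2 a1 b1 & divG g1 g2 a2 b2].
Proof.
move=> h1 h2; set D := a2 ^+ 2 + b2 ^+ 2.
have hD : 0 <= D / delta by apply: divr_ge0; [rewrite /D addr_ge0 ?sqr_ge0 | apply: ltW].
set k := Num.Def.archi_bound (D / delta).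
have hk := archi_boundP hD; rewrite -/k in hk.
apply: (@gcd_k k) => //.
have hk2 : k%:R <= (2 ^+ k : R).
  by rewrite -natrX ler_nat; apply: ltnW; apply: ltn_expl.
have : D / delta < 2 ^+ k by lra.
by rewrite ltr_pdivrMr // mulrC.
Qed.

Definition Tset (T : R) := exists g1 g2, Lam g1 g2 /\ exists n : int, T = n%:~R * (g1 ^+ 2 + g2 ^+ 2).

Lemma Tset0 : Tset 0.
Proof. by exists 0, 0; split => //; exists 0; rewrite rmorph0 mul0r. Qed.

Lemma Tset_det a1 b1 a2 b2 : Lam a1 b1 -> Lam a2 b2 -> Tset (a1 * b2 - a2 * b1).
Proof.
move=> h1 h2; have [g1 [g2 [hg [n1 [m1 [e1 f1]]] [n2 [m2 [e2 f2]]]]]] := gcd_ex h1 h2.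
exists g1, g2; split => //; exists (m1 * n2 - n1 * m2).
rewrite !(rmorphB, rmorphM) /= e1 f1 e2 f2; ring.
Qed.

Lemma TsetB T1 T2 : Tset T1 -> Tset T2 -> Tset (T1 - T2).
Proof.
move=> [h1 [h2 [hh [n1 e1]]]] [k1 [k2 [hk [n2 e2]]]].
have [g1 [g2 [hg [p [q [ep1 ep2]]] [p' [q' [eq1 eq2]]]]]] := gcd_ex hh hk.
exists g1, g2; split => //; exists (n1 * (p ^+ 2 + q ^+ 2) - n2 * (p' ^+ 2 + q' ^+ 2)).
rewrite !(rmorphB, rmorphM, rmorphD, rmorphXn) /= e1 e2 ep1 ep2 eq1 eq2; ring.
Qed.

Lemma Tset_bound T : Tset T -> T != 0 -> delta <= `|T|.
Proof.
move=> [g1 [g2 [hg [n e]]]] hT.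
have hn : n != 0 by apply/eqP => n0; move: hT; rewrite e n0 rmorph0 mul0r eqxx.
have hg0 : g1 != 0 \/ g2 != 0.
  have [a0|a0] := eqVneq g1 0; have [b0|b0] := eqVneq g2 0; try by [left|right].
  by move: hT; rewrite e a0 b0 expr0n /= addr0 mulr0 eqxx.
have hm := Lam_min hg hg0.
have hn1 : 1 <= `|(n%:~R : R)| by rewrite -intr_norm ler1z; case: n hn {e} => [[|n]|n].
rewrite e normrM (ger0_norm (addr_ge0 (sqr_ge0 _) (sqr_ge0 _))).
have : 0 <= g1 ^+ 2 + g2 ^+ 2 by rewrite addr_ge0 ?sqr_ge0.
nra.
Qed.

End Gauss.

Section Main.
Variables (L : splittingFieldType rat) (R : realType) (iota : {rmorphism L -> R}).
Variable (s : gal_of {:L}).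
Hypothesis HGal : galois 1 {:L}.
Hypothesis Hs : 'Gal({:L} / 1%VS)%g = <[s]>%g.
Hypothesis Hos : #[s]%g = 4%N.
Variables (l : {subfield L}) (Hl : \dim l = 2%N).

Lemma dimL : \dim {:L} = 4%N.
Proof.
by have := galois_dim HGal; rewrite Hs dimv1 divn1 => ->; rewrite -Hos.
Qed.

Lemma galLl : galois l {:L}.
Proof. by apply: (galoisS _ HGal); rewrite sub1v subvf. Qed.

Lemma cardGl : #|'Gal({:L} / l)%g| = 2%N.
Proof. by rewrite -(galois_dim galLl) dimL Hl. Qed.

Lemma s2_in : (s ^+ 2)%g \in 'Gal({:L} / l)%g.
Proof.
case: (pickP (fun g => (g \in 'Gal({:L} / l)%g) && (g != 1%g))) => [g /andP[hg hg1] | hno].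
  have [k hk gk] := gal_pow Hs Hos g.
  have h2 : (g ^+ 2)%g = 1%g.
    by apply/eqP; rewrite -order_dvdn -cardGl order_dvdG.
  move: h2; rewrite gk -expgM => /eqP; rewrite -(expg0 s) eq_expg_mod_order Hos mod0n.
  move: hg hg1; rewrite gk; case: k hk {gk} => [|[|[|[|k]]]] //= _; first by rewrite expg0 eqxx.
have : ('Gal({:L} / l)%g \subset [set (1%g : gal_of {:L})])%g.
  apply/fintype.subsetP => x hx; rewrite inE; have := hno x; rewrite hx /= => /negbFE //.
move=> /subset_leq_card; rewrite cards1 cardGl //.
Qed.

Lemma Gl_eq : 'Gal({:L} / l)%g = [set 1%g; (s ^+ 2)%g].
Proof.
apply/eqP; rewrite eq_sym eqEcard cards2 cardGl; apply/andP; split.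
  by apply/fintype.subsetP => x; rewrite !inE => /orP [] /eqP ->; rewrite ?group1 ?s2_in.
rewrite eq_sym -(expg0 s) eq_expg_mod_order Hos //.
Qed.

Lemma normLl x : galNorm l {:L} x = x * (s ^+ 2)%g x.
Proof.
rewrite /galNorm Gl_eq big_setU1 /=; last first.
  by rewrite inE eq_sym -(expg0 s) eq_expg_mod_order Hos.
by rewrite big_set1 gal_id.
Qed.

Lemma fix_l x : x \in l -> (s ^+ 2)%g x = x.
Proof. by move=> hx; apply: (fixed_gal (subvf l) s2_in hx). Qed.


Lemma int_ge1 (z : int) : z != 0 -> 1 <= `|(z%:~R : R)|.
Proof. by move=> hz; rewrite -intr_norm ler1z; case: z hz => [[|n]|n]. Qed.

Definition xk (k : nat) (x : L) : R := iota ((s ^+ k)%g x).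

Lemma xkM k x y : xk k (x * y) = xk k x * xk k y.
Proof. by rewrite /xk !rmorphM. Qed.
Lemma xkV k x : xk k x^-1 = (xk k x)^-1.
Proof. by rewrite /xk !fmorphV. Qed.
Lemma xk_eq0 k x : (xk k x == 0) = (x == 0).
Proof. by rewrite /xk !fmorph_eq0. Qed.
Lemma xk1 k : xk k 1 = 1.
Proof. by rewrite /xk !rmorph1. Qed.
Lemma xkN k x : xk k (- x) = - xk k x.
Proof. by rewrite /xk !rmorphN. Qed.
Lemma xkB k x y : xk k (x - y) = xk k x - xk k y.
Proof. by rewrite /xk !rmorphB. Qed.
Lemma xkX k j x : xk k ((s ^+ j)%g x) = xk (j + k) x.
Proof. by rewrite /xk galX. Qed.
Lemma xk_mod k x : xk k x = xk (k %% 4) x.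
Proof. by rewrite /xk (gal_mod Hos). Qed.
Lemma xkXz k x (z : int) : xk k (x ^ z) = (xk k x) ^ z.
Proof. by rewrite /xk !fmorphXz. Qed.

Lemma normQ_xk x : iota (galNorm 1 {:L} x) = \prod_(k < 4) xk k x.
Proof. by rewrite (galNormQ Hs Hos) rmorph_prod. Qed.

Lemma unit_norm u : OL_unit u -> \prod_(k < 4) `|xk k u| = 1.
Proof.
case=> hu [hu0 hui].
have [z1 h1] := galNormQ_int HGal Hs Hos hu.
have [z2 h2] := galNormQ_int HGal Hs Hos hui.
have e : galNorm 1 {:L} u * galNorm 1 {:L} u^-1 = 1 by rewrite -galNormM mulfV // galNorm1.
rewrite h1 h2 in e; have eR := congr1 iota e.
rewrite rmorphM rmorph1 !rmorph_int in eR.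
rewrite -normr_prod -normQ_xk h1 rmorph_int.
have n1 : z1 != 0 by apply/eqP => z0; move: eR; rewrite z0 mul0r => /eqP; rewrite eq_sym oner_eq0.
have n2 : z2 != 0 by apply/eqP => z0; move: eR; rewrite z0 mulr0 => /eqP; rewrite eq_sym oner_eq0.
have g1 := int_ge1 n1; have g2 := int_ge1 n2.
have : `|(z1%:~R : R)| * `|(z2%:~R : R)| = 1 by rewrite -normrM eR normr1.
nra.
Qed.

Lemma schinzel b : OL_unit b -> b != 1 -> b != -1 ->
  1 <= \prod_(k < 4) `|xk k b - (xk k b)^-1|.
Proof.
case=> hb [hb0 hbi] hb1 hbm1.
have hg : alg_int (b - b^-1) by apply: alg_int_sub.
have [z hz] := galNormQ_int HGal Hs Hos hg.
have hz0 : z != 0.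
  apply/eqP => z0; move: hz; rewrite z0 mulr0z => /eqP; rewrite galNorm_eq0 subr_eq0.
  move=> /eqP hbb; have : b ^+ 2 == 1 by rewrite expr2 {2}hbb mulfV.
  by rewrite sqrf_eq1 (negbTE hb1) (negbTE hbm1).
have := int_ge1 hz0; rewrite -(rmorph_int iota) -hz normQ_xk normr_prod.
by under eq_bigr => k _ do rewrite xkB xkV.
Qed.


Lemma alg_int_opp (x : L) : alg_int x -> alg_int (- x).
Proof. by move=> /alg_intE h; apply/alg_intE; apply: integral_opp. Qed.

Lemma OL1 : OL_unit (1 : L).
Proof. by split; [apply: alg_int1 | split; [apply: oner_neq0 | rewrite invr1; apply: alg_int1]]. Qed.

Lemma OLM (x y : L) : OL_unit x -> OL_unit y -> OL_unit (x * y).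
Proof.
case=> hx [hx0 hxi] [hy [hy0 hyi]]; split; first exact: alg_int_mul.
by split; [rewrite mulf_neq0 | rewrite invfM; apply: alg_int_mul].
Qed.

Lemma OLV (x : L) : OL_unit x -> OL_unit x^-1.
Proof. by case=> hx [hx0 hxi]; split => //; split; [rewrite invr_eq0 | rewrite invrK]. Qed.

Lemma OLN (x : L) : OL_unit x -> OL_unit (- x).
Proof.
case=> hx [hx0 hxi]; split; first exact: alg_int_opp.
by split; [rewrite oppr_eq0 | rewrite invrN; apply: alg_int_opp].
Qed.

Lemma OLg (g : gal_of {:L}) x : OL_unit x -> OL_unit (g x).
Proof.
case=> hx [hx0 hxi]; split; first exact: alg_int_gal.
by split; [rewrite fmorph_eq0 | rewrite -fmorphV; apply: alg_int_gal].
Qed.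

Lemma OLXn (x : L) n : OL_unit x -> OL_unit (x ^+ n).
Proof. by move=> hx; elim: n => [|n ih]; [rewrite expr0; apply: OL1 | rewrite exprS; apply: OLM]. Qed.

Lemma OLXz (x : L) (z : int) : OL_unit x -> OL_unit (x ^ z).
Proof.
move=> hx; case: z => n; first exact: OLXn.
by rewrite NegzE -exprnN; apply: OLV; apply: OLXn.
Qed.

Definition P (k : nat) (x : L) : R := ln `|xk k x|.

Lemma normxk_gt0 k x : x != 0 -> 0 < `|xk k x|.
Proof. by move=> hx; rewrite normr_gt0 xk_eq0. Qed.

Lemma P_mul k x y : x != 0 -> y != 0 -> P k (x * y) = P k x + P k y.
Proof.
move=> hx hy; rewrite /P xkM normrM lnM // posrE; exact: normxk_gt0.
Qed.

Lemma P_inv k x : x != 0 -> P k x^-1 = - P k x.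
Proof. by move=> hx; rewrite /P xkV normfV lnV // posrE; apply: normxk_gt0. Qed.

Lemma P_opp k x : P k (- x) = P k x.
Proof. by rewrite /P xkN normrN. Qed.

Lemma P1 k : P k 1 = 0.
Proof. by rewrite /P xk1 normr1 ln1. Qed.

Lemma P_Xn k x n : x != 0 -> P k (x ^+ n) = n%:R * P k x.
Proof.
move=> hx; elim: n => [|n ih]; first by rewrite expr0 P1 mul0r.
by rewrite exprS P_mul ?expf_neq0 // ih mulrSr mulrDl mul1r addrC.
Qed.

Lemma P_Xz k x (z : int) : x != 0 -> P k (x ^ z) = z%:~R * P k x.
Proof.
move=> hx; case: z => n; first by rewrite P_Xn.
rewrite NegzE -exprnN P_inv ?expf_neq0 // P_Xn // mulrNz mulNr.
by rewrite -[(n.+1)%:~R]/((n.+1)%:R).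
Qed.

Lemma P_X k j x : P k ((s ^+ j)%g x) = P (j + k) x.
Proof. by rewrite /P xkX. Qed.

Lemma P_mod k x : P k x = P (k %% 4) x.
Proof. by rewrite /P xk_mod. Qed.

Definition pm1 (e : L) := e = 1 \/ e = -1.
Definition rel_unit (r : L) := OL_unit r /\ pm1 (r * (s ^+ 2)%g r).

Lemma pm1_gal (g : gal_of {:L}) e : pm1 e -> pm1 (g e).
Proof. by case=> ->; [left; rewrite rmorph1 | right; rewrite rmorphN rmorph1]. Qed.

Lemma pm1M e1 e2 : pm1 e1 -> pm1 e2 -> pm1 (e1 * e2).
Proof. by case=> -> [] ->; rewrite ?mulr1 ?mulrN1 ?opprK; [left|right|right|left]. Qed.

Lemma pm1V e : pm1 e -> pm1 e^-1.
Proof. by case=> ->; rewrite ?invr1 ?invrN1; [left|right]. Qed.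

Lemma pm1Xn e n : pm1 e -> pm1 (e ^+ n).
Proof. by move=> he; elim: n => [|n ih]; [left; rewrite expr0 | rewrite exprS; apply: pm1M]. Qed.

Lemma pm1Xz e (z : int) : pm1 e -> pm1 (e ^ z).
Proof.
move=> he; case: z => n; first exact: pm1Xn.
by rewrite NegzE -exprnN; apply: pm1V; apply: pm1Xn.
Qed.

Lemma pm1_xk k e : pm1 e -> `|iota ((s ^+ k)%g e)| = 1.
Proof. by case=> ->; rewrite ?rmorphN !rmorph1 ?normrN normr1. Qed.

Lemma rel1 : rel_unit 1.
Proof. by split; [apply: OL1 | left; rewrite rmorph1 mulr1]. Qed.

Lemma relM r1 r2 : rel_unit r1 -> rel_unit r2 -> rel_unit (r1 * r2).
Proof.
case=> h1 e1 [h2 e2]; split; first exact: OLM.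
have -> : r1 * r2 * (s ^+ 2)%g (r1 * r2) = (r1 * (s ^+ 2)%g r1) * (r2 * (s ^+ 2)%g r2).
  by rewrite rmorphM; ring.
exact: pm1M.
Qed.

Lemma relV r : rel_unit r -> rel_unit r^-1.
Proof.
case=> h e; split; first exact: OLV.
by rewrite fmorphV -invfM; apply: pm1V.
Qed.

Lemma relXz r (z : int) : rel_unit r -> rel_unit (r ^ z).
Proof.
case=> h e; split; first exact: OLXz.
by rewrite fmorphXz -expfzMl; apply: pm1Xz.
Qed.

Lemma relJ r : rel_unit r -> rel_unit ((s ^+ 1)%g r).
Proof.
case=> h e; split; first exact: OLg.
rewrite galX -[(1 + 2)%N]/(2 + 1)%N -galX -rmorphM.
exact: pm1_gal.
Qed.

Lemma rel_pair r k : rel_unit r -> `|xk k r| * `|xk (k + 2) r| = 1.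
Proof.
case=> h e; rewrite -normrM -[(k + 2)%N]addnC -xkX -xkM.
exact: pm1_xk.
Qed.

Lemma rel_P2 r k : rel_unit r -> P (k + 2) r = - P k r.
Proof.
move=> hr; have := rel_pair k hr; have [[h [h0 _]] _] := hr => e.
apply/eqP; rewrite -subr_eq0 opprK /P addrC -lnM ?posrE ?normxk_gt0 //.
by rewrite e ln1.
Qed.

Definition Uk (k : nat) : R := nth 0 [:: 1; 0; -1; 0] (k %% 4).
Definition Vk (k : nat) : R := nth 0 [:: 0; 1; 0; -1] (k %% 4).
Definition Ek (k : nat) : R := nth 0 [:: 1; -1; 1; -1] (k %% 4).
Definition RV (a b : R) (k : nat) : R := a * Uk k + b * Vk k.

Lemma mod4_cases k : [\/ k %% 4 = 0, k %% 4 = 1, k %% 4 = 2 | k %% 4 = 3]%N.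
Proof.
have : (k %% 4 < 4)%N by rewrite ltn_mod.
by case: (k %% 4)%N => [|[|[|[|]]]] //= _; [constructor 1|constructor 2|constructor 3|constructor 4].
Qed.

Lemma rel_RV r k : rel_unit r -> P k r = RV (P 0 r) (P 1 r) k.
Proof.
move=> hr; rewrite P_mod /RV /Uk /Vk.
have h2 := rel_P2 0 hr; have h3 := rel_P2 1 hr; rewrite /= in h2 h3.
by case: (mod4_cases k) => ->; rewrite /= ?h2 ?h3; ring.
Qed.

Definition Lam (a b : R) := exists r, rel_unit r /\ P 0 r = a /\ P 1 r = b.

Lemma Lam0 : Lam 0 0.
Proof. by exists 1; rewrite !P1; split => //; apply: rel1. Qed.

Lemma rel_neq0 r : rel_unit r -> r != 0.
Proof. by case=> [[_ [h _]] _]. Qed.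

Lemma LamB a1 b1 a2 b2 : Lam a1 b1 -> Lam a2 b2 -> Lam (a1 - a2) (b1 - b2).
Proof.
case=> r1 [h1 [<- <-]] [r2 [h2 [<- <-]]]; exists (r1 * r2^-1).
have n1 := rel_neq0 h1; have n2 := rel_neq0 h2.
split; first by apply: relM => //; apply: relV.
by rewrite !P_mul ?invr_eq0 // !P_inv.
Qed.

Lemma LamZ a b (z : int) : Lam a b -> Lam (z%:~R * a) (z%:~R * b).
Proof.
case=> r [h [<- <-]]; exists (r ^ z); split; first exact: relXz.
by rewrite !P_Xz ?rel_neq0.
Qed.

Lemma LamJ a b : Lam a b -> Lam b (- a).
Proof.
case=> r [h [<- <-]]; exists ((s ^+ 1)%g r); split; first exact: relJ.
by rewrite !P_X /= (rel_P2 0 h).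
Qed.

Lemma LamG a b (n m : int) : Lam a b -> Lam (n%:~R * a + m%:~R * b) (n%:~R * b - m%:~R * a).
Proof.
move=> h; have h1 := LamZ n h; have h2 := LamZ (- m) (LamJ h).
have := LamB h1 h2; congr Lam; rewrite rmorphN /=; ring.
Qed.


Lemma sq_ge1 (B : R) : 0 <= B -> 1 <= B * B -> 1 <= B.
Proof. move=> h0 h; rewrite leNgt; apply/negP => h1; nra. Qed.

Lemma sq_eq1 (B : R) : 0 <= B -> B * B = 1 -> B = 1.
Proof.
move=> h0 h; apply/eqP; rewrite -subr_eq0.
have e : (B - 1) * (B + 1) = B * B - 1 by ring.
have : (B - 1) * (B + 1) = 0 by rewrite e h subrr.
move/eqP; rewrite mulf_eq0 => /orP [] // /eqP h1; lra.
Qed.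

Lemma prod4 (F : nat -> R) : \prod_(k < 4) F k = F 0%N * F 1%N * F 2%N * F 3%N.
Proof. by rewrite !big_ord_recr big_ord0 /= mul1r. Qed.

Lemma symV (x y : R) : x != 0 -> `|x| * `|y| = 1 -> `|y - y^-1| = `|x - x^-1|.
Proof.
move=> hx e; have hy : y != 0.
  by apply/eqP => y0; move: e; rewrite y0 normr0 mulr0 => /eqP; rewrite eq_sym oner_eq0.
have hax : `|x| != 0 by rewrite normr_eq0.
rewrite (absV_form hx) (absV_form hy).
have -> : `|y| = `|x|^-1 by apply: (mulfI hax); rewrite e mulfV.
by rewrite invrK distrC.
Qed.

Lemma xk0 x : xk 0 x = iota x.
Proof. by rewrite /xk expg0 gal_id. Qed.

Lemma xk_nz k x : x != 0 -> xk k x != 0.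
Proof. by rewrite xk_eq0. Qed.

Lemma Lam_schinzel a b : Lam a b -> a != 0 \/ b != 0 -> 2 * ln (phi R) <= `|a| + `|b|.
Proof.
case=> r [hr [<- <-]] hab.
have r0 := rel_neq0 hr.
have r1 : r != 1 by apply/eqP => e; move: hab; rewrite e !P1 eqxx; case.
have rm1 : r != -1 by apply/eqP => e; move: hab; rewrite e !P_opp !P1 eqxx; case.
have := schinzel hr.1 r1 rm1; rewrite (prod4 (fun k => `|xk k r - (xk k r)^-1|)).
rewrite (symV (xk_nz 0 r0) (rel_pair 0 hr)) (symV (xk_nz 1 r0) (rel_pair 1 hr)).
set A0 := `|xk 0 r - _|; set A1 := `|xk 1 r - _| => h.
have hA0 : 0 <= A0 by apply: normr_ge0.
have hA1 : 0 <= A1 by apply: normr_ge0.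
have h1 : 1 <= A0 * A1.
  apply: sq_ge1; first exact: mulr_ge0.
  by have -> : A0 * A1 * (A0 * A1) = A0 * A1 * A0 * A1 by ring.
exact: key_rel (xk_nz 0 r0) (xk_nz 1 r0) h1.
Qed.

Variables (ul : L).
Hypothesis Hul_l : ul \in l.
Hypothesis Hul_unit : OL_unit ul.
Hypothesis Hul_gt1 : 1 < iota ul.
Hypothesis Hul_fund : forall v : L, v \in l -> OL_unit v ->
      exists k : int, v = ul ^ k \/ v = - ul ^ k.
Hypothesis Hnorm : ~ exists u : L, OL_unit u /\
      (galNorm l {:L} u = ul \/ galNorm l {:L} u = - ul).

Lemma ul0 : ul != 0.
Proof. by case: Hul_unit => _ []. Qed.

Lemma xk_ul2 : xk 2 ul = xk 0 ul.
Proof. by rewrite /xk (fix_l Hul_l) expg0 gal_id. Qed.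

Lemma xk_ul3 : xk 3 ul = xk 1 ul.
Proof. by rewrite -[3%N]/(2 + 1)%N -xkX (fix_l Hul_l). Qed.

Lemma ul_pair : `|xk 0 ul| * `|xk 1 ul| = 1.
Proof.
have := unit_norm Hul_unit; rewrite (prod4 (fun k => `|xk k ul|)) xk_ul2 xk_ul3 => h.
apply: sq_eq1; first by apply: mulr_ge0; apply: normr_ge0.
by rewrite -h; ring.
Qed.

Definition cL : R := ln (iota ul).

Lemma P_ul k : P k ul = cL * Ek k.
Proof.
have hx : 0 < iota ul by apply: lt_trans Hul_gt1.
have e0 : P 0 ul = cL by rewrite /P xk0 gtr0_norm.
have e1 : P 1 ul = - cL.
  apply/eqP; rewrite -subr_eq0 opprK -e0 addrC /P -lnM ?posrE ?normxk_gt0 ?ul0 //.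
  by rewrite ul_pair ln1.
rewrite P_mod /Ek; case: (mod4_cases k) => -> /=.
- by rewrite e0 mulr1.
- by rewrite e1 mulrN1.
- by rewrite /P xk_ul2 -/(P 0 ul) e0 mulr1.
- by rewrite /P xk_ul3 -/(P 1 ul) e1 mulrN1.
Qed.

Lemma cL_ge : ln (phi R) <= cL.
Proof.
have hx : 0 < iota ul by apply: lt_trans Hul_gt1.
have u1 : ul != 1 by apply/eqP => e; move: Hul_gt1; rewrite e rmorph1 ltxx.
have um1 : ul != -1.
  by apply/eqP => e; move: Hul_gt1; rewrite e rmorphN rmorph1; lra.
have := schinzel Hul_unit u1 um1; rewrite (prod4 (fun k => `|xk k ul - (xk k ul)^-1|)) xk_ul2 xk_ul3.
rewrite (symV (xk_nz 0 ul0) ul_pair) xk0.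
set A := `|iota ul - _| => h.
have hA : 0 <= A by apply: normr_ge0.
have h1 : 1 <= A.
  apply: sq_ge1 => //; apply: sq_ge1; first by apply: mulr_ge0.
  by have -> : A * A * (A * A) = A * A * A * A by ring.
apply: key_ul => //; move: h1; rewrite /A ger0_norm // subr_ge0.
by apply: le_trans (ltW Hul_gt1); rewrite invf_le1 // ltW.
Qed.

Lemma decomp u : OL_unit u -> exists (m : int) r, rel_unit r /\ u = ul ^ m * r.
Proof.
move=> hu.
have hN := normLl u.
have hNl : galNorm l {:L} u \in l := mem_galNorm galLl (memvf u).
have hNu : OL_unit (galNorm l {:L} u) by rewrite hN; apply: OLM => //; apply: OLg.
have [k hk] := Hul_fund hNl hNu.
set m := (k %/ 2)%Z; set b := (k %% 2)%Z.
have hkmb : k = m * 2 + b := divz_eq k 2.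
have hb : b = 0 \/ b = 1.
  have h0 : 0 <= b by apply: modz_ge0.
  have h2 : b < 2 by apply: ltz_pmod.
  move: h0 h2; clear; move: b => b h0 h2; lia.
set r := u * ul ^ (- m).
have hr : OL_unit r by apply: OLM => //; apply: OLXz.
have hs2 : (s ^+ 2)%g (ul ^ (- m)) = ul ^ (- m).
  by rewrite fmorphXz; congr (_ ^ _); exact: (fix_l Hul_l).
have hrN : r * (s ^+ 2)%g r = galNorm l {:L} u * ul ^ (- m * 2).
  rewrite hN /r.
  have -> : (s ^+ 2)%g (u * ul ^ (- m)) = (s ^+ 2)%g u * ul ^ (- m).
    by rewrite rmorphM; congr (_ * _); exact: hs2.
  have -> : - m * 2 = - m + - m by ring.
  rewrite expfzDr ?ul0 //; ring.
have hb' : k + - m * 2 = b by rewrite hkmb; ring.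
have hb'' : k - m * 2 = b by rewrite hkmb; ring.
have hrN' : pm1 (ul ^ b) -> pm1 (r * (s ^+ 2)%g r).
  rewrite hrN; case: hk => ->; rewrite ?mulNr -expfzDr ?ul0 // ?hb' ?hb'' //.
  by case=> ->; [right|left]; rewrite ?opprK.
case: hb => hb.
  exists m, r; split; first by split => //; apply: hrN'; left; rewrite hb expr0z.
  by rewrite /r mulrCA -expfzDr ?ul0 // subrr expr0z mulr1.
exfalso; apply: Hnorm; exists r; split => //.
rewrite normLl hrN; case: hk => ->; rewrite ?mulNr -expfzDr ?ul0 // ?hb' ?hb'' hb expr1z; by [left|right].
Qed.


Definition delta0 : R := 2 * ln (phi R) ^+ 2.

Lemma delta0_gt0 : 0 < delta0.
Proof. rewrite /delta0; have := lnphi_gt0 R => h; nra. Qed.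

Lemma Lam_min a b : Lam a b -> a != 0 \/ b != 0 -> delta0 <= a ^+ 2 + b ^+ 2.
Proof.
move=> h hab; have := Lam_schinzel h hab => hs.
have hl := lnphi_gt0 R.
rewrite /delta0 -(real_normK (num_real a)) -(real_normK (num_real b)).
have ha : 0 <= `|a| by apply: normr_ge0.
have hb : 0 <= `|b| by apply: normr_ge0.
have h2 : (`|a| + `|b|) ^+ 2 <= 2 * (`|a| ^+ 2 + `|b| ^+ 2).
  have := sqr_ge0 (`|a| - `|b|); nra.
nra.
Qed.

Lemma LamZ' a b (z : int) : Lam a b -> Lam (z%:~R * a) (z%:~R * b).
Proof. exact: LamZ. Qed.

Definition tau (k : nat) : L -> R := fun x => iota ((s ^+ k)%g x).

Lemma LOG_tau x k : LOG x (tau k) = P k x.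
Proof. by []. Qed.

Definition Wform (a b T : R) (i j : nat) : R :=
  cL * (Ek i * RV a b j - Ek j * RV a b i) + T * (Uk i * Vk j - Uk j * Vk i).

Definition Inv (w : (L -> R) -> (L -> R) -> R) := exists a b T,
  [/\ Lam a b, Tset Lam T & forall i j, w (tau i) (tau j) = Wform a b T i j].

Lemma LOG_unit u : OL_unit u -> exists (m : int) a b, Lam a b /\
  forall k, LOG u (tau k) = m%:~R * cL * Ek k + RV a b k.
Proof.
move=> hu; have [m [r [hr ->]]] := decomp hu.
exists m, (P 0 r), (P 1 r); split; first by exists r.
move=> k; rewrite LOG_tau P_mul ?expfz_neq0 ?ul0 ?rel_neq0 //.
by rewrite P_Xz ?ul0 // P_ul (rel_RV k hr) mulrA.
Qed.

Lemma Inv_all w : wedge2_LOG_group w -> Inv w.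
Proof.
have hG := @LamG.
elim => [|x y hx hy|w1 w2 _ [a1 [b1 [T1 [h1 t1 e1]]]] _ [a2 [b2 [T2 [h2 t2 e2]]]]].
- exists 0, 0, 0; split; [exact: Lam0 | exact: (Tset0 Lam0) | move=> i j /=; rewrite /Wform /RV; ring].
- have [m1 [a1 [b1 [h1 e1]]]] := LOG_unit hx.
  have [m2 [a2 [b2 [h2 e2]]]] := LOG_unit hy.
  exists (m1%:~R * a2 - m2%:~R * a1), (m1%:~R * b2 - m2%:~R * b1), (a1 * b2 - a2 * b1).
  split.
  + by apply: LamB; apply: LamZ.
  + apply: (Tset_det LamB hG delta0_gt0 Lam_min h1 h2).
  + by move=> i j; rewrite /wedge2 !e1 !e2 /Wform /RV; ring.
- exists (a1 - a2), (b1 - b2), (T1 - T2); split.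
  + exact: LamB.
  + exact: (TsetB LamB hG delta0_gt0 Lam_min t1 t2).
  + by move=> i j; rewrite e1 e2 /Wform /RV; ring.
Qed.

Lemma tau_emb k : real_emb (tau k).
Proof. by split => [x y|x y|]; rewrite /tau ?rmorphD ?rmorphM ?rmorph1. Qed.

Lemma emb_tau f : real_emb f -> exists2 k, (k < 4)%N & f = tau k.
Proof.
move=> hf; have [g hg] := emb_gal iota hf.
have [k hk gk] := gal_pow Hs Hos g.
exists k => //; apply: funext => x; by rewrite hg gk.
Qed.

Lemma tau_inj i j : (i < 4)%N -> (j < 4)%N -> tau i = tau j -> i = j.
Proof.
move=> hi hj e.
have : (s ^+ i)%g == (s ^+ j)%g.
  apply/gal_eqP => x _; apply: (fmorph_inj iota).
  by have := congr1 (fun f => f x) e.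
by rewrite eq_expg_mod_order Hos !modn_small // => /eqP.
Qed.


Definition S6 (a b T : R) : R :=
  `|cL * (a + b) + T| + `|2 * cL * a| + `|cL * (a - b) - T| + `|cL * (a - b) + T|
  + `|2 * cL * b| + `|T - cL * (a + b)|.

Lemma sum16 a b T :
  \sum_(i < 4) \sum_(j < 4) `|Wform a b T i j| = 2 * S6 a b T.
Proof.
rewrite !big_ord_recr !big_ord0 /=.
have e00 : Wform a b T 0 0 = 0 by rewrite /Wform /RV /Uk /Vk /Ek /=; ring.
have e01 : Wform a b T 0 1 = cL * (a + b) + T by rewrite /Wform /RV /Uk /Vk /Ek /=; ring.
have e02 : Wform a b T 0 2 = - (2 * cL * a) by rewrite /Wform /RV /Uk /Vk /Ek /=; ring.
have e03 : Wform a b T 0 3 = cL * (a - b) - T by rewrite /Wform /RV /Uk /Vk /Ek /=; ring.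
have e10 : Wform a b T 1 0 = - (cL * (a + b) + T) by rewrite /Wform /RV /Uk /Vk /Ek /=; ring.
have e11 : Wform a b T 1 1 = 0 by rewrite /Wform /RV /Uk /Vk /Ek /=; ring.
have e12 : Wform a b T 1 2 = cL * (a - b) + T by rewrite /Wform /RV /Uk /Vk /Ek /=; ring.
have e13 : Wform a b T 1 3 = 2 * cL * b by rewrite /Wform /RV /Uk /Vk /Ek /=; ring.
have e20 : Wform a b T 2 0 = - (- (2 * cL * a)) by rewrite /Wform /RV /Uk /Vk /Ek /=; ring.
have e21 : Wform a b T 2 1 = - (cL * (a - b) + T) by rewrite /Wform /RV /Uk /Vk /Ek /=; ring.
have e22 : Wform a b T 2 2 = 0 by rewrite /Wform /RV /Uk /Vk /Ek /=; ring.
have e23 : Wform a b T 2 3 = T - cL * (a + b) by rewrite /Wform /RV /Uk /Vk /Ek /=; ring.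
have e30 : Wform a b T 3 0 = - (cL * (a - b) - T) by rewrite /Wform /RV /Uk /Vk /Ek /=; ring.
have e31 : Wform a b T 3 1 = - (2 * cL * b) by rewrite /Wform /RV /Uk /Vk /Ek /=; ring.
have e32 : Wform a b T 3 2 = - (T - cL * (a + b)) by rewrite /Wform /RV /Uk /Vk /Ek /=; ring.
have e33 : Wform a b T 3 3 = 0 by rewrite /Wform /RV /Uk /Vk /Ek /=; ring.
rewrite e00 e01 e02 e03 e10 e11 e12 e13 e20 e21 e22 e23 e30 e31 e32 e33.
rewrite !normrN normr0 /S6; ring.
Qed.

Lemma Wform_eq0 i j : Wform 0 0 0 i j = 0.
Proof. by rewrite /Wform /RV; ring. Qed.

Lemma two_abs (X T : R) : 2 * `|X| <= `|X + T| + `|X - T|.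
Proof.
have -> : 2 * `|X| = `|(X + T) + (X - T)|.
  by rewrite -[2]/(2%:R) -normr_nat -normrM; congr `|_|; rewrite -[2%:R]/(1 + 1); ring.
exact: ler_normD.
Qed.

Lemma S6_bound a b T : Lam a b -> Tset Lam T -> (a != 0 \/ b != 0 \/ T != 0) ->
  8 * ln (phi R) ^+ 2 <= S6 a b T.
Proof.
move=> hl ht hnz.
have hl0 := lnphi_gt0 R.
have hc := cL_ge.
have hc0 : 0 <= cL by lra.
have [hab|hab] : (a != 0 \/ b != 0) \/ (a = 0 /\ b = 0).
  have [a0|a0] := eqVneq a 0; have [b0|b0] := eqVneq b 0; by [right|left; right|left; left|left; left].
- have hs := Lam_schinzel hl hab.
  have n2a : `|2 * cL * a| = 2 * cL * `|a| by rewrite normrM ger0_norm //; lra.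
  have n2b : `|2 * cL * b| = 2 * cL * `|b| by rewrite normrM ger0_norm //; lra.
  have t1 := two_abs (cL * (a + b)) T.
  have t2 := two_abs (cL * (a - b)) (- T).
  rewrite opprK in t2.
  have e1 : `|T - cL * (a + b)| = `|cL * (a + b) - T| by rewrite distrC.
  have n1 : `|cL * (a + b)| = cL * `|a + b| by rewrite normrM ger0_norm.
  have n3 : `|cL * (a - b)| = cL * `|a - b| by rewrite normrM ger0_norm.
  have u1 := two_abs a b.
  have u2 := two_abs b a.
  have e2 : `|b - a| = `|a - b| by rewrite distrC.
  have e3 : `|b + a| = `|a + b| by rewrite addrC.
  rewrite e2 e3 in u2.
  have hA : `|a| + `|b| <= `|a + b| + `|a - b| by lra.
  have h1 : cL * (`|a| + `|b|) <= cL * (`|a + b| + `|a - b|) by apply: ler_wpM2l.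
  have h2 : ln (phi R) * (`|a| + `|b|) <= cL * (`|a| + `|b|).
    by apply: ler_wpM2r => //; apply: addr_ge0; apply: normr_ge0.
  have h3 : ln (phi R) * (2 * ln (phi R)) <= ln (phi R) * (`|a| + `|b|).
    by apply: ler_wpM2l => //; apply: ltW.
  rewrite /S6 n2a n2b e1; rewrite n1 n3 in t1 t2.
  have -> : 8 * ln (phi R) ^+ 2 = 4 * (ln (phi R) * (2 * ln (phi R))) by ring.
  have h4 : 2 * (cL * (`|a| + `|b|)) <= 2 * cL * `|a| + 2 * cL * `|b| by lra.
  lra.
- case: hab => a0 b0; rewrite a0 b0 in hl hnz *.
  have hT : T != 0 by case: hnz => [|[]] //; rewrite eqxx.
  have hb := Tset_bound Lam_min ht hT.
  rewrite /S6 !(addr0, subr0, mulr0, normr0, add0r, sub0r, normrN).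
  rewrite /delta0 in hb; lra.
Qed.

Local Open Scope classical_set_scope.

Lemma norm_eq w a b T : (forall i j, w (tau i) (tau j) = Wform a b T i j) ->
  wedge_norm1 w = (\sum_(i < 4) \sum_(j < 4) `|Wform a b T i j|) / 2.
Proof.
move=> hw; rewrite /wedge_norm1; congr (_ / 2).
pose A : set ('I_4 * 'I_4) := [set p | p.1 != p.2].
pose h := fun p : 'I_4 * 'I_4 => (tau p.1, tau p.2).
have hE : emb_pairs (L:=L) (R:=R) = [set h x | x in A].
  apply/seteqP; split => [[f g] /= [hf [hg hfg]] | _ [[i j] /= hij <-]].
    move: hf hg hfg => /= hf hg hfg.
    have [i hi ef] := emb_tau hf; have [j hj eg] := emb_tau hg.
    exists (Ordinal hi, Ordinal hj); last by rewrite /h /= ef eg.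
    by rewrite /A /=; apply/eqP => e; apply: hfg; rewrite ef eg; case: e => ->.
  split; first exact: tau_emb.
  split; first exact: tau_emb.
  by move=> /= e; move: hij; rewrite /A /=; have := tau_inj (ltn_ord i) (ltn_ord j) e => /val_inj ->; rewrite eqxx.
rewrite hE fsbig_image; last first.
  move=> [i j] [i' j'] _ _ [e1 e2].
  have := tau_inj (ltn_ord i) (ltn_ord i') e1 => /val_inj ->.
  by have := tau_inj (ltn_ord j) (ltn_ord j') e2 => /val_inj ->.
rewrite (@fsbig_widen _ _ _ _ A setT); last 2 first.
- by [].
- move=> [i j] [_ /=]; rewrite /A /= => /negP; rewrite negbK => /eqP <-.
  by rewrite /h /= hw; rewrite /Wform /RV; apply/eqP; rewrite normr_eq0; apply/eqP; ring.
have e : [set: 'I_4 * 'I_4] = [set` enum [set: 'I_4 * 'I_4]].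
  by apply/seteqP; split => p //= _; rewrite mem_enum inE.
rewrite e -fsbig_seq ?enum_uniq // big_enum /=.
rewrite (eq_bigl (fun _ => true)); last by move=> p; rewrite in_setT.
rewrite -(pair_bigA _ (fun i j : 'I_4 => `|w (tau i) (tau j)|)) /=.
by apply: eq_bigr => i _; apply: eq_bigr => j _; rewrite hw.
Qed.

Lemma main_sec (w : (L -> R) -> (L -> R) -> R) : wedge2_LOG_group w -> wedge_nonzero w ->
  8 * ln (phi R) ^+ 2 <= wedge_norm1 w.
Proof.
move=> hw [f [g [hf [hg nz]]]].
have [a [b [T [hl ht e]]]] := Inv_all hw.
have [i hi ef] := emb_tau hf; have [j hj eg] := emb_tau hg.
rewrite ef eg e in nz.
rewrite (norm_eq e) sum16.
have -> : 2 * S6 a b T / 2 = S6 a b T by field.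
apply: S6_bound => //.
have [a0|a0] := eqVneq a 0; have [b0|b0] := eqVneq b 0; have [T0|T0] := eqVneq T 0;
  try by [left|right; left|right; right].
by move: nz; rewrite a0 b0 T0 Wform_eq0 eqxx.
Qed.

End Main.

Unset Implicit Arguments.
Set Strict Implicit.

Theorem mainTheorem9 (L : splittingFieldType rat) (R : realType)
  (iota : {rmorphism L -> R})
  (HGal : galois 1%VS {:L})
  (Hcyc : cyclic 'Gal({:L} / 1%VS)%g)
  (Hord : #|'Gal({:L} / 1%VS)%g| = 4%N)
  (l : {subfield L}) (Hl : \dim l = 2%N)
  (ul : L) (Hul_l : ul \in l) (Hul_unit : OL_unit ul) (Hul_gt1 : 1 < iota ul)
  (Hul_fund : forall v : L, v \in l -> OL_unit v ->
      exists k : int, v = ul ^ k \/ v = - ul ^ k)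
  (Hnorm : ~ exists u : L, OL_unit u /\
      (galNorm l {:L} u = ul \/ galNorm l {:L} u = - ul)) :
  forall w : (L -> R) -> (L -> R) -> R,
    wedge2_LOG_group w -> wedge_nonzero w ->
    8 * (ln ((1 + Num.sqrt 5) / 2)) ^+ 2 <= wedge_norm1 w.
Proof.
move=> w hw hnz.
have [s Gs] := cyclicP Hcyc.
have Hos : #[s]%g = 4%N by rewrite /order -Gs Hord.
exact: (main_sec HGal Gs Hos Hl Hul_l Hul_unit Hul_gt1 Hul_fund Hnorm hw hnz).
Qed.
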